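(* Let $X\subseteq\mathcal{A}^{\mathbb{Z}}$ be an aperiodic subshift having at most $L$ right asymptotic tails and at most $L$ left asymptotic tails. Then $X$ has at most $2L^2\cdot(\#\mathcal{A})^2$ centered asymptotic pairs.
   Context: A pair $(x,\tilde x)$ of points of $X$ is right asymptotic if there is $k\in\mathbb{Z}$ with $x_{(k,\infty)}=\tilde x_{(k,\infty)}$ and $x_k\ne\tilde x_k$; it is centered right asymptotic if moreover $k=0$. A right asymptotic tail of $X$ is a one-sided sequence $x_{(0,\infty)}$ where $(x,\tilde x)$ is a centered right asymptotic pair in $X$. Left asymptotic pairs, centered left asymptotic pairs and left asymptotic tails are defined symmetrically (with $x_{(-\infty,k)}=\tilde x_{(-\infty,k)}$, $x_k\neq\tilde x_k$, and tails $x_{(-\infty,0)}$). A centered asymptotic pair is a centered right asymptotic pair or a centered left asymptotic pair. $X$ is aperiodic if it has no periodic points. *)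

(* Defs.v *)
From mathcomp Require Import all_boot.
From Stdlib Require Import ZArith List.
Set Implicit Arguments.
Unset Strict Implicit.
Unset Printing Implicit Defensive.

Open Scope Z_scope.

Definition config (A : finType) := Z -> A.

Definition shift (A : finType) (x : config A) : config A := fun i => x (i + 1).

(* X is closed in the product topology: a point all of whose central
   windows [-n,n] agree with some point of X belongs to X. *)
Definition closed_set (A : finType) (X : config A -> Prop) : Prop :=
  forall x : config A,
    (forall n : nat, exists y, X y /\ forall i, - Z.of_nat n <= i <= Z.of_nat n -> y i = x i) ->
    X x.

Definition subshift (A : finType) (X : config A -> Prop) : Prop :=
  closed_set X /\ (forall x, X x <-> X (shift x)).

Definition aperiodic (A : finType) (X : config A -> Prop) : Prop :=
  forall x, X x -> forall p : Z, 0 < p -> ~ (forall i, x (i + p) = x i).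

Definition centered_right_asymptotic (A : finType) (X : config A -> Prop)
  (x y : config A) : Prop :=
  X x /\ X y /\ (forall i, 0 < i -> x i = y i) /\ x 0 <> y 0.

Definition centered_left_asymptotic (A : finType) (X : config A -> Prop)
  (x y : config A) : Prop :=
  X x /\ X y /\ (forall i, i < 0 -> x i = y i) /\ x 0 <> y 0.

Definition centered_asymptotic (A : finType) (X : config A -> Prop)
  (x y : config A) : Prop :=
  centered_right_asymptotic X x y \/ centered_left_asymptotic X x y.

(* One-sided sequences x_(0,oo) and x_(-oo,0), indexed by nat:
   right_tail x n = x_(n+1),  left_tail x n = x_(-(n+1)). *)
Definition right_tail (A : finType) (x : config A) : nat -> A :=
  fun n => x (Z.of_nat n + 1).
Definition left_tail (A : finType) (x : config A) : nat -> A :=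
  fun n => x (- (Z.of_nat n + 1)).

Definition is_right_asymptotic_tail (A : finType) (X : config A -> Prop)
  (t : nat -> A) : Prop :=
  exists x y, centered_right_asymptotic X x y /\ t = right_tail x.

Definition is_left_asymptotic_tail (A : finType) (X : config A -> Prop)
  (t : nat -> A) : Prop :=
  exists x y, centered_left_asymptotic X x y /\ t = left_tail x.

Definition at_most (T : Type) (n : nat) (P : T -> Prop) : Prop :=
  exists l : list T, (length l <= n)%nat /\ forall t, P t -> In t l.

(* Main.v *)
Require Import Defs.
From mathcomp Require Import all_boot.
From Stdlib Require Import ZArith List.
From Stdlib Require Import Lia Classical FunctionalExtensionality.
From mathcomp Require Import zify.
Set Implicit Arguments.
Unset Strict Implicit.

Lemma inT (T : eqType) (x : T) (s : seq.seq T) : x \in s -> In x s.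
Proof.
elim: s => //= a s IH; rewrite seq.in_cons => /orP [/eqP ->|/IH]; auto.
Qed.

Lemma size_length (T : Type) (s : seq.seq T) : size s = length s.
Proof. by elim: s => //= a s ->. Qed.

Lemma NoDup_map_inj (T U : Type) (f : T -> U) (l : list T) :
  (forall a b, f a = f b -> a = b) -> NoDup l -> NoDup (map f l).
Proof.
move=> Hf; elim: l => [|a l IH] /=; first by constructor.
move=> Hn; inversion Hn; subst; constructor; last by auto.
move=> /in_map_iff [b [Hb Hbl]]; have := Hf _ _ Hb; move=> E; subst; auto.
Qed.

Lemma count_rel (T U : Type) (P : T -> Prop) (R : T -> U -> Prop) (lc : list U) :
  (forall t1 t2 u, P t1 -> P t2 -> R t1 u -> R t2 u -> t1 = t2) ->
  (forall t, P t -> exists u, R t u /\ In u lc) ->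
  exists l : list T, (length l <= length lc)%coq_nat /\ forall t, P t -> In t l.
Proof.
elim: lc P => [|a lc IH] P Hinj Hcov.
- exists nil; split => // t Pt. case: (Hcov t Pt) => u [_ []].
- case: (classic (exists t, P t /\ R t a)) => [[t0 [Pt0 Rt0]]|Hn].
  + case: (IH (fun t => P t /\ ~ R t a)).
    * move=> t1 t2 u [P1 _] [P2 _]; exact: Hinj.
    * move=> t [Pt Hr]; case: (Hcov t Pt) => u [Ru Iu]; simpl in Iu.
      destruct Iu as [Eu|Iu]; [subst; contradiction | by exists u].
    * move=> l' [Hl' Hin]; exists (t0 :: l'); split; first by simpl; lia.
      move=> t Pt; case: (classic (R t a)) => Ha.
      -- left; exact: (Hinj t0 t a).
      -- right; exact: Hin.
  + case: (IH P Hinj).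
    * move=> t Pt; case: (Hcov t Pt) => u [Ru Iu]; simpl in Iu.
      destruct Iu as [Eu|Iu]; last by exists u.
      subst; exfalso; apply: Hn; by exists t.
    * move=> l' [Hl' Hin]; exists l'; split => //; simpl; lia.
Qed.

Definition shiftinv (A : finType) (X : config A -> Prop) :=
  forall x m, X x -> X (fun i => x (i + m)%Z).

Definition noevper (A : finType) (X : config A -> Prop) :=
  forall x p N, X x -> (0 < p)%Z -> (forall i, (N <= i)%Z -> x (i + p)%Z = x i) -> False.

Lemma subshift_shiftinv (A : finType) (X : config A -> Prop) : subshift X -> shiftinv X.
Proof.
move=> [_ HS].
have Hp : forall n : nat, forall x, X x ->
    X (fun i => x (i + Z.of_nat n)%Z) /\ X (fun i => x (i - Z.of_nat n)%Z).
{ elim=> [|n IH] x Hx.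
  - replace (fun i => x (i + Z.of_nat 0)%Z) with x
      by (apply functional_extensionality => i; f_equal; lia).
    replace (fun i => x (i - Z.of_nat 0)%Z) with x
      by (apply functional_extensionality => i; f_equal; lia).
    by split.
  - case: (IH x Hx) => H1 H2; split.
    + have := (proj1 (HS _) H1).
      replace (Defs.shift (fun i => x (i + Z.of_nat n)%Z)) with (fun i => x (i + Z.of_nat n.+1)%Z) => //.
      apply functional_extensionality => i; rewrite /Defs.shift; f_equal; lia.
    + apply (proj2 (HS _)).
      replace (Defs.shift (fun i => x (i - Z.of_nat n.+1)%Z)) with (fun i => x (i - Z.of_nat n)%Z) => //.
      apply functional_extensionality => i; rewrite /Defs.shift; f_equal; lia. }
move=> x m Hx.
case: (Z_le_gt_dec 0 m) => Hm.
- have := proj1 (Hp (Z.to_nat m) x Hx); rewrite Z2Nat.id //.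
- have := proj2 (Hp (Z.to_nat (- m)) x Hx); rewrite Z2Nat.id; last lia.
  replace (fun i => x (i - - m)%Z) with (fun i => x (i + m)%Z) => //.
  apply functional_extensionality => i; f_equal; lia.
Qed.

Lemma noevper_of (A : finType) (X : config A -> Prop) :
  closed_set X -> shiftinv X -> aperiodic X -> noevper X.
Proof.
move=> Hc Hs Ha x p N Hx Hp Hper.
have Hq : forall q : nat, forall r, (N <= r)%Z -> x (r + Z.of_nat q * p)%Z = x r.
{ elim=> [|q IH] r Hr.
  - f_equal; lia.
  - have -> : (r + Z.of_nat q.+1 * p = (r + Z.of_nat q * p) + p)%Z by lia.
    rewrite Hper; [exact: IH | nia]. }
pose z := fun i => x (N + (i - N) mod p)%Z.
have Hxz : forall j, (N <= j)%Z -> x j = z j.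
{ move=> j Hj. rewrite /z.
  have Hd := Z.div_mod (j - N) p ltac:(lia).
  have Hq0 : (0 <= (j - N) / p)%Z by apply Z.div_pos; lia.
  have Hm := Z.mod_pos_bound (j - N) p Hp.
  rewrite -(Hq (Z.to_nat ((j - N) / p)) (N + (j - N) mod p)%Z); last lia.
  f_equal. rewrite Z2Nat.id //. nia. }
have Hz : X z.
{ apply: Hc => n.
  exists (fun i => x (i + p * (Z.abs N + Z.of_nat n))%Z); split; first exact: Hs.
  move=> i Hi. rewrite Hxz; last nia.
  rewrite /z. f_equal. f_equal.
  have -> : (i + p * (Z.abs N + Z.of_nat n) - N = (i - N) + (Z.abs N + Z.of_nat n) * p)%Z by ring.
  rewrite Z.mod_add; lia. }
apply: (Ha z Hz p Hp) => i.
rewrite /z. f_equal. f_equal.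
have -> : (i + p - N = (i - N) + 1 * p)%Z by ring.
rewrite Z.mod_add; lia.
Qed.

Definition branch (A : finType) (X : config A -> Prop) (x : config A) (k : nat) :=
  exists z, X z /\ (forall i, (- Z.of_nat k < i)%Z -> z i = x i) /\
            z (- Z.of_nat k)%Z <> x (- Z.of_nat k)%Z.

Definition tailat (A : finType) (x : config A) (k : nat) : nat -> A :=
  right_tail (fun i => x (i - Z.of_nat k)%Z).

Lemma tailat_inj (A : finType) (X : config A -> Prop) x m1 m2 :
  noevper X -> X x -> tailat x m1 = tailat x m2 -> m1 = m2.
Proof.
move=> Hn Hx Heq.
have key : forall a b, (a < b)%coq_nat -> tailat x a = tailat x b -> False.
{ move=> a b Hab E.
  apply: (Hn x (Z.of_nat b - Z.of_nat a)%Z (1 - Z.of_nat b)%Z Hx); first lia.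
  move=> i Hi.
  have H := equal_f E (Z.to_nat (i - 1 + Z.of_nat b)).
  move: H; rewrite /tailat /right_tail Z2Nat.id; last lia.
  have -> : (i - 1 + Z.of_nat b + 1 - Z.of_nat a = i + (Z.of_nat b - Z.of_nat a))%Z by lia.
  have -> : (i - 1 + Z.of_nat b + 1 - Z.of_nat b = i)%Z by lia.
  done. }
case: (Nat.lt_total m1 m2) => [H|[H|H]] //.
- exfalso; exact: key H Heq.
- exfalso; exact: key H (esym Heq).
Qed.

Lemma branch_tail (A : finType) (X : config A -> Prop) x k :
  shiftinv X -> X x -> branch X x k -> is_right_asymptotic_tail X (tailat x k).
Proof.
move=> Hs Hx [z [Hz [Hzi Hz0]]].
exists (fun i => x (i - Z.of_nat k)%Z), (fun i => z (i - Z.of_nat k)%Z).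
split => //; split; [exact: Hs | split; [exact: Hs | split]].
- move=> i Hi /=; rewrite Hzi //; lia.
- have -> : (0 - Z.of_nat k = - Z.of_nat k)%Z by lia.
  by move=> E; apply: Hz0.
Qed.

Lemma max_branch (A : finType) (X : config A -> Prop) (L : nat) x :
  shiftinv X -> noevper X -> at_most L (is_right_asymptotic_tail X) ->
  X x -> branch X x 0 -> exists K, branch X x K /\ forall k, branch X x k -> (k <= K)%coq_nat.
Proof.
move=> Hs Hn [l [Hl Hin]] Hx H0.
apply: NNPP => Hno.
have Hnm : forall K, branch X x K -> exists k, branch X x k /\ (K < k)%coq_nat.
{ move=> K HK; apply: NNPP => H2; apply: Hno; exists K; split => // k Hk.
  apply: NNPP => H3; apply: H2; exists k; split => //; lia. }
have Hbuild : forall n : nat, exists k (lst : list nat), branch X x k /\ length lst = n /\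
    NoDup lst /\ (forall m, In m lst -> branch X x m /\ (m < k)%coq_nat).
{ elim=> [|n [k [lst [Hk [Hlen [Hnd Hall]]]]]].
  - exists 0%nat, nil; split => //; split => //; split => //; constructor.
  - case: (Hnm k Hk) => k' [Hk' Hlt].
    exists k', (k :: lst); split => //; split; first by simpl; lia.
    split.
    + constructor => // Hkin. have := proj2 (Hall k Hkin). lia.
    + move=> m /= [<-|Hm]; first by split.
      case: (Hall m Hm) => ? ?; split => //; lia. }
case: (Hbuild L.+1) => k [lst [_ [Hlen [Hnd Hall]]]].
have Hnd' : NoDup (map (tailat x) lst).
{ apply: NoDup_map_inj => // a b; exact: tailat_inj Hn Hx. }
have Hinc : incl (map (tailat x) lst) l.
{ move=> t /in_map_iff [m [<- Hm]]. apply: Hin. apply: branch_tail => //.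
  exact: (proj1 (Hall m Hm)). }
have := NoDup_incl_length Hnd' Hinc.
rewrite length_map Hlen. move: Hl. lia.
Qed.

Definition codeX (A : finType) (X : config A -> Prop) (x : config A) (c : (nat -> A) * A) :=
  exists K, branch X x K /\ (forall k, branch X x k -> (k <= K)%coq_nat) /\
    c = (tailat x K, x (- Z.of_nat K)%Z).

Lemma code_unique (A : finType) (X : config A -> Prop) x x' c :
  shiftinv X -> X x -> X x' -> codeX X x c -> codeX X x' c ->
  exists a, forall i, x' i = x (i + a)%Z.
Proof.
move=> Hs Hx Hx' [K [HK [HKm ->]]] [K' [HK' [HK'm Hc]]].
case: Hc => Ht Hs0.
have Hpos : forall j, (0 <= j)%Z -> x (j - Z.of_nat K)%Z = x' (j - Z.of_nat K')%Z.
{ move=> j Hj. case: (Z.eq_dec j 0) => [->|Hj0].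
  - by rewrite !Z.sub_0_l.
  - have := equal_f Ht (Z.to_nat (j - 1)).
    rewrite /tailat /right_tail Z2Nat.id; last lia.
    by rewrite Z.sub_add. }
have Hall : forall j, x (j - Z.of_nat K)%Z = x' (j - Z.of_nat K')%Z.
{ move=> j; apply: NNPP => Hj.
  have Hjneg : (j < 0)%Z.
  { case: (Z_lt_le_dec j 0) => // H; exfalso; exact: Hj (Hpos j H). }
  pose P := fun d : nat => x (- Z.of_nat d - Z.of_nat K)%Z != x' (- Z.of_nat d - Z.of_nat K')%Z.
  have Pd0 : P (Z.to_nat (- j)).
  { rewrite /P Z2Nat.id; last lia. rewrite Z.opp_involutive. by apply/eqP. }
  case: (ex_minnP (ex_intro P _ Pd0)) => d Hd Hmin.
  have Hagree : forall j', (- Z.of_nat d < j')%Z -> x (j' - Z.of_nat K)%Z = x' (j' - Z.of_nat K')%Z.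
  { move=> j' Hj'. case: (Z_lt_le_dec j' 0) => H; last exact: Hpos.
    apply/eqP. apply: negbNE. apply/negP => HP.
    have := Hmin (Z.to_nat (- j')).
    rewrite /P Z2Nat.id; last lia. rewrite Z.opp_involutive => /(_ HP). lia. }
  have Hd0 : d <> 0%nat.
  { move=> E; subst d. move/eqP: Hd; apply. exact: Hpos. }
  have Hb : branch X x (K + d)%nat.
  { exists (fun i => x' (i + (Z.of_nat K - Z.of_nat K'))%Z); split; first exact: Hs.
    split.
    - move=> i Hi. have := Hagree (i + Z.of_nat K)%Z ltac:(lia).
      have -> : (i + Z.of_nat K - Z.of_nat K = i)%Z by lia.
      have -> : (i + Z.of_nat K - Z.of_nat K' = i + (Z.of_nat K - Z.of_nat K'))%Z by lia.
      by move=> ->.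
    - move/eqP: Hd.
      have -> : (- Z.of_nat (K + d)%nat + (Z.of_nat K - Z.of_nat K') = - Z.of_nat d - Z.of_nat K')%Z by lia.
      have -> : (- Z.of_nat (K + d)%nat = - Z.of_nat d - Z.of_nat K)%Z by lia.
      move=> H E; apply: H; by rewrite E. }
  have := HKm _ Hb. lia. }
exists (Z.of_nat K' - Z.of_nat K)%Z => i.
have := Hall (i + Z.of_nat K')%Z.
have -> : (i + Z.of_nat K' - Z.of_nat K' = i)%Z by lia.
have -> : (i + Z.of_nat K' - Z.of_nat K = i + (Z.of_nat K' - Z.of_nat K))%Z by lia.
by move=> ->.
Qed.

Lemma align (A : finType) (X : config A -> Prop) (x y x' y' : config A) a b :
  noevper X -> X x -> (forall i, (0 < i)%Z -> x i = y i) -> x 0%Z <> y 0%Z ->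
  (forall i, (0 < i)%Z -> x' i = y' i) -> x' 0%Z <> y' 0%Z ->
  (forall i, x' i = x (i + a)%Z) -> (forall i, y' i = y (i + b)%Z) -> a = 0%Z /\ b = 0%Z.
Proof.
move=> Hn Hx Hxy H0 Hxy' H0' Ea Eb.
have Hab : a = b.
{ case: (Z.lt_total a b) => [H|[H|H]] //; exfalso.
  - apply: (Hn x (b - a)%Z (Z.abs a + 1)%Z Hx); first lia.
    move=> j Hj.
    have E := Hxy' (j - a)%Z ltac:(lia). rewrite Ea Eb in E.
    have -> : (j + (b - a) = j - a + b)%Z by lia.
    rewrite Hxy; last lia. rewrite -E. f_equal; lia.
  - apply: (Hn x (a - b)%Z (Z.abs b + 1)%Z Hx); first lia.
    move=> j Hj.
    have E := Hxy' (j - b)%Z ltac:(lia). rewrite Ea Eb in E.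
    have -> : (j + (a - b) = j - b + a)%Z by lia.
    rewrite E. rewrite -Hxy; last lia. f_equal; lia. }
subst b. suff : a = 0%Z by [].
case: (Z.lt_total a 0) => [H|[->|H]] //; exfalso.
- apply: H0. have := Hxy' (- a)%Z ltac:(lia). rewrite Ea Eb.
  by rewrite Z.add_opp_diag_l.
- apply: H0'. rewrite Ea Eb. apply: Hxy. lia.
Qed.

Lemma right_count (A : finType) (X : config A -> Prop) (L : nat) :
  shiftinv X -> noevper X -> at_most L (is_right_asymptotic_tail X) ->
  at_most (L ^ 2 * #|A| ^ 2)%nat (fun p : config A * config A => centered_right_asymptotic X p.1 p.2).
Proof.
move=> Hs Hn Hat.
have Hat' := Hat. case: Hat' => l [Hl Hin].
pose C := list_prod l (enum A).
have Hcode : forall x y, X x -> X y -> (forall i, (0 < i)%Z -> x i = y i) -> x 0%Z <> y 0%Z ->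
    exists c, codeX X x c /\ In c C.
{ move=> x y Hx Hy Hxy H0.
  have Hb0 : branch X x 0.
  { exists y; split => //; split.
    - move=> i Hi; rewrite Hxy //; lia.
    - by move=> E; apply: H0. }
  case: (max_branch Hs Hn Hat Hx Hb0) => K [HK HKm].
  exists (tailat x K, x (- Z.of_nat K)%Z); split; first by exists K.
  apply: in_prod; first by apply: Hin; exact: branch_tail.
  apply: inT. by rewrite mem_enum. }
case: (@count_rel _ _ (fun p : config A * config A => centered_right_asymptotic X p.1 p.2)
   (fun p u => codeX X p.1 u.1 /\ codeX X p.2 u.2) (list_prod C C)).
- move=> [x y] [x' y'] [u1 u2] /= [Hx [Hy [Hxy H0]]] [Hx' [Hy' [Hxy' H0']]] [C1 C2] [C1' C2'] /=.
  case: (code_unique Hs Hx Hx' C1 C1') => a Ea.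
  case: (code_unique Hs Hy Hy' C2 C2') => b Eb.
  case: (align Hn Hx Hxy H0 Hxy' H0' Ea Eb) => Ha Hb; subst a b.
  f_equal; apply: functional_extensionality => i; [rewrite Ea | rewrite Eb]; f_equal; lia.
- move=> [x y] /= [Hx [Hy [Hxy H0]]].
  case: (Hcode x y Hx Hy Hxy H0) => c1 [Hc1 Ic1].
  case: (Hcode y x Hy Hx (fun i Hi => esym (Hxy i Hi)) (fun E => H0 (esym E))) => c2 [Hc2 Ic2].
  exists (c1, c2); split => //. exact: in_prod.
- move=> l' [Hl' Hin']; exists l'; split => //.
  have Hc : length (enum A) = #|A| by rewrite -size_length cardE.
  move: Hl'; rewrite !length_prod Hc.
  move: Hl. set LL := length l. set N := #|A|. move=> Hl H. rewrite !Nat.pow_2_r.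
  have H1 : (LL * N <= L * N)%coq_nat by apply: Nat.mul_le_mono_r; apply/leP.
  have H2 := Nat.mul_le_mono _ _ _ _ H1 H1.
  apply/leP. rewrite /muln /muln_rec. lia.
Qed.

Definition rev_cfg (A : finType) (x : config A) : config A := fun i => x (- i)%Z.

Lemma rev_cfgK (A : finType) (x : config A) : rev_cfg (rev_cfg x) = x.
Proof. apply: functional_extensionality => i; rewrite /rev_cfg Z.opp_involutive //. Qed.

Theorem lemma6p6 (A : finType) (X : config A -> Prop) (L : nat) :
  subshift X -> aperiodic X ->
  at_most L (is_right_asymptotic_tail X) ->
  at_most L (is_left_asymptotic_tail X) ->
  at_most (2 * L ^ 2 * #|A| ^ 2)%nat
    (fun p : config A * config A => centered_asymptotic X p.1 p.2).
Proof.
move=> Hsub Hap HR HLt.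
have Hs := subshift_shiftinv Hsub.
have Hc : closed_set X by case: Hsub.
have Hn := noevper_of Hc Hs Hap.
pose Xr := fun x : config A => X (rev_cfg x).
have Hsr : shiftinv Xr.
{ move=> x m Hx. rewrite /Xr.
  have := Hs _ (- m)%Z Hx.
  congr X; apply: functional_extensionality => i; rewrite /rev_cfg; f_equal; lia. }
have Hcr : closed_set Xr.
{ move=> x Hx. apply: Hc => n. case: (Hx n) => y [Hy Hyx].
  exists (rev_cfg y); split => // i Hi. rewrite /rev_cfg Hyx //; lia. }
have Hapr : aperiodic Xr.
{ move=> x Hx p Hp Hper. apply: (Hap _ Hx p Hp) => i.
  rewrite /rev_cfg. have := Hper (- (i + p))%Z.
  have -> : (- (i + p) + p = - i)%Z by lia. by move=> ->. }
have Hnr := noevper_of Hcr Hsr Hapr.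
have HRr : at_most L (is_right_asymptotic_tail Xr).
{ case: HLt => l [Hl Hin]. exists l; split => // t [x [y [[Hx [Hy [Hxy H0]]] ->]]].
  have -> : right_tail x = left_tail (rev_cfg x).
  { apply: functional_extensionality => n; rewrite /left_tail /right_tail /rev_cfg.
    f_equal; lia. }
  apply: Hin. exists (rev_cfg x), (rev_cfg y); split => //.
  split => //; split => //; split.
  - move=> i Hi; rewrite /rev_cfg; apply: Hxy; lia.
  - by rewrite /rev_cfg. }
case: (right_count Hs Hn HR) => l1 [Hl1 Hin1].
case: (right_count Hsr Hnr HRr) => l2 [Hl2 Hin2].
exists (l1 ++ map (fun p => (rev_cfg p.1, rev_cfg p.2)) l2); split.
- move: Hl1 Hl2; rewrite length_app length_map.
  set a := Nat.pow L 2. set b := Nat.pow #|A| 2. move=> H1 H2. apply/leP.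
  move/leP: H1; move/leP: H2. rewrite /muln /muln_rec. nia.
- move=> [x y] /= [H|[Hx [Hy [Hxy H0]]]]; apply/in_or_app; first by left; exact: Hin1.
  right. apply/in_map_iff. exists (rev_cfg x, rev_cfg y); split; first by rewrite /= !rev_cfgK.
  apply: Hin2 => /=. split; first by rewrite /Xr rev_cfgK.
  split; first by rewrite /Xr rev_cfgK. split.
  + move=> i Hi; rewrite /rev_cfg; apply: Hxy; lia.
  + by rewrite /rev_cfg.
Qed.
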